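(* For every admissible $i$, $K^i\subseteq Z^i$, where $Z^i=\{V_\bullet\in\mathrm{Fl}(1^n,s-1)\mid V_{i-1}\subseteq\mathrm{im}(x)\subseteq V_n\subseteq x^{-1}V_{i-1}\}$.
   Context: Fix integers $n\ge 2$ and $s\ge n-1$, let $N=n+s-1$, and let $e_1,\dots,e_N$ be the standard basis of $\mathbb{C}^N$. Let $x:\mathbb{C}^N\to\mathbb{C}^N$ be the linear map with $xe_m=e_{m-(n-1)}$ for $n\le m\le 2n-2$ and $xe_m=0$ otherwise; thus $\mathrm{im}(x)=\mathrm{span}(e_1,\dots,e_{n-1})$. $x^{-1}V$ denotes the preimage of a subspace $V$ under $x$. $\mathrm{Fl}(1^n,s-1)$ is the variety of partial flags $V_\bullet=(0=V_0\subset V_1\subset\cdots\subset V_n\subset\mathbb{C}^N)$ with $\dim V_j=j$. The $\Delta$-Springer fiber is $Y=\{V_\bullet\in\mathrm{Fl}(1^n,s-1)\mid \mathrm{im}(x)\subseteq V_n,\ xV_j\subseteq V_j \text{ for all } j\}$. For distinct $w_1,\dots,w_n\in\{1,\dots,N\}$, the Schubert cell $X_w^\circ$ is the set of flags with $\dim(V_j\cap\mathrm{span}(e_1,\dots,e_m))=\#\{l\le j: w_l\le m\}$ for all $j,m$. An index $i$ is admissible if $1\le i\le n$ when $s>n-1$, and $2\le i\le n$ when $s=n-1$. For admissible $i$ put $w^{(i)}=(n-1,n-2,\dots,n-i+1,\,N,\,n-i,\dots,1)$ and let $K^i$ be the closure in $Y$ of $X^\circ_{w^{(i)}}\cap Y$.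 *)

(* Defs.v *)
From HB Require Import structures.
From mathcomp Require Import all_boot all_order all_algebra.
From mathcomp Require Import reals.
From mathcomp Require Import complex.
Set Implicit Arguments. Unset Strict Implicit. Unset Printing Implicit Defensive.
Import Order.TTheory GRing.Theory Num.Theory.
Local Open Scope ring_scope.

(* Vectors of C^N are row vectors 'rV_N; a subspace is the row space of a
   matrix (mxalgebra, scope %MS).  A partial flag V_1 < ... < V_n in C^N with
   dim V_j = j is represented by a row-free matrix A : 'M_(n, N): V_j is the
   span of the first j rows of A. *)

Section Delta.
Variable (C : fieldType) (n N : nat).

Definition flagV (A : 'M[C]_(n, N)) (j : nat) : 'M[C]_(n, N) :=
  \matrix_(k < n, b < N) (if (k < j)%N then A k b else 0).

(* The nilpotent map x acting on row vectors v |-> v *m xmat.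
   0-indexed: e_a |-> e_(a - (n-1)) for n-1 <= a <= 2n-3, and 0 otherwise
   (this is x e_m = e_(m-(n-1)) for n <= m <= 2n-2, 1-indexed). *)
Definition xmat : 'M[C]_N :=
  \matrix_(a < N, b < N)
    (((n.-1 <= a)%N && (a < (n.-1).*2)%N && (b + n.-1 == a)%N)%:R).

Definition coordSpan (m : nat) : 'M[C]_N :=
  \matrix_(a < N, b < N) (((a == b) && (a < m)%N)%:R).

Definition inY (A : 'M[C]_(n, N)) : Prop :=
  row_free A /\ (xmat <= A)%MS /\
  forall j : nat, (j <= n)%N -> (flagV A j *m xmat <= flagV A j)%MS.

(* Schubert cell X_w^o, for w given as a 1-indexed function l |-> w_l *)
Definition inSchubertCell (w : nat -> nat) (A : 'M[C]_(n, N)) : Prop :=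
  row_free A /\
  forall j m : nat, (j <= n)%N -> (m <= N)%N ->
    \rank (flagV A j :&: coordSpan m)%MS =
    (\sum_(1 <= l < j.+1) ((w l <= m)%N : nat))%N.

(* Z^i = { V_(i-1) <= im x <= V_n <= x^{-1} V_(i-1) }.
   V_n <= x^{-1} W is, by definition of the preimage, x V_n <= W. *)
Definition inZ (i : nat) (A : 'M[C]_(n, N)) : Prop :=
  row_free A /\
  (flagV A i.-1 <= xmat)%MS /\ (xmat <= A)%MS /\ (A *m xmat <= flagV A i.-1)%MS.

End Delta.

(* w^(i) = (n-1, n-2, ..., n-i+1, N, n-i, ..., 1), as l |-> w_l, 1 <= l <= n *)
Definition wperm (n N i : nat) (l : nat) : nat :=
  (if l < i then n - l else if l == i then N else n - l + 1)%N.

(* Closure of a set S of flags (given by representatives, S invariant under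
   change of representative) in the classical topology of Fl(1^n, s-1):
   the flag variety is the quotient of the open set of row-free matrices by
   the (lower triangular) change-of-basis group; the quotient map is open,
   so a flag is in the closure of S iff matrices representing flags of S
   come arbitrarily close (entrywise) to a representative of it. *)
Definition in_closure (R : realType) (n N : nat)
    (S : 'M[R[i]]_(n, N) -> Prop) (A : 'M[R[i]]_(n, N)) : Prop :=
  row_free A /\
  forall eps : R[i], 0 < eps ->
    exists B : 'M[R[i]]_(n, N), S B /\
      forall (a : 'I_n) (b : 'I_N), `|A a b - B a b| < eps.

(* K^i : closure in Y of X_(w^(i))^o \cap Y  (= Y \cap ambient closure). *)
Definition inK (R : realType) (n s i : nat) (A : 'M[R[i]]_(n, (n + s).-1)) : Prop :=
  inY A /\
  in_closure (fun B => inSchubertCell (wperm n (n + s).-1 i) B /\ inY B) A.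

(* Main.v *)
Require Import Defs.
From HB Require Import structures.
From mathcomp Require Import all_boot all_order all_algebra.
From mathcomp Require Import reals complex.
From mathcomp Require Import ring lra zify.
Import Order.TTheory GRing.Theory Num.Theory.
Local Open Scope ring_scope.

Module Helpers.
Set Implicit Arguments. Unset Strict Implicit. Unset Printing Implicit Defensive.
Section Alg.
Variable (C : fieldType) (n N : nat).

Lemma flagV_pid (A : 'M[C]_(n, N)) j : flagV A j = pid_mx j *m A.
Proof.
apply/matrixP => k b; rewrite /xmat ?/coordSpan !mxE (bigD1 k) //= big1 => [|l /negbTE lk].
  by rewrite /xmat ?mxE eqxx /=; case: ifP => _; rewrite ?mul1r ?mul0r addr0.
rewrite /xmat ?mxE; case: eqP => [kl|]; last by rewrite mul0r.
  by move: lk; rewrite -(inj_eq val_inj) /= -kl eqxx.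
Qed.

Lemma flagV_n (A : 'M[C]_(n, N)) : flagV A n = A.
Proof. by apply/matrixP => k b; rewrite /xmat ?mxE ltn_ord. Qed.

Lemma rank_flagV (A : 'M[C]_(n, N)) j : row_free A -> (j <= n)%N ->
  \rank (flagV A j) = j.
Proof. by move=> fA jn; rewrite flagV_pid mxrankMfree // rank_pid_mx. Qed.

Lemma flagV_mono (A : 'M[C]_(n, N)) j j' : (j <= j')%N ->
  (flagV A j <= flagV A j')%MS.
Proof.
move=> jj; have -> : flagV A j = flagV (flagV A j') j.
  by apply/matrixP => k b; rewrite /xmat ?/coordSpan !mxE; case: ifP => // kj; rewrite (leq_trans kj jj).
by rewrite flagV_pid submxMl.
Qed.

Lemma coordSpanP m k (M : 'M[C]_(k, N)) :
  reflect (forall a (b : 'I_N), (m <= b)%N -> M a b = 0) (M <= coordSpan C N m)%MS.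
Proof.
apply: (iffP idP).
  move=> /submxP [D ->] a b mb; rewrite /xmat ?mxE big1 // => l _.
  idtac.
  rewrite /xmat ?mxE; case: eqP => [->|] /=; last by rewrite mulr0.
  by rewrite ltnNge mb mulr0.
move=> H; suff <- : M *m coordSpan C N m = M by exact: submxMl.
apply/matrixP => a b; rewrite /xmat ?mxE (bigD1 b) //= big1 => [|l /negbTE lb].
  rewrite /xmat ?mxE eqxx /= addr0; case: ltnP => bm; first by rewrite mulr1.
  by rewrite mulr0 H.
by rewrite /xmat ?mxE lb mulr0.
Qed.

Lemma coordSpan_mono m m' : (m <= m')%N -> (coordSpan C N m <= coordSpan C N m')%MS.
Proof.
move=> mm; apply/coordSpanP => a b mb; rewrite /xmat ?mxE.
case: eqP => [ab|] //=; rewrite ab ltnNge (leq_trans mm mb) //.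
Qed.

Lemma sub_rank_eq k1 k2 (A : 'M[C]_(k1, N)) (B : 'M[C]_(k2, N)) :
  (A <= B)%MS -> (\rank B <= \rank A)%N -> (B <= A)%MS.
Proof.
move=> AB r; have := mxrank_leqif_sup AB => -[_ <-]; apply/eqP.
by apply/anti_leq; rewrite r (mxrank_leqif_sup AB).1.
Qed.

End Alg.
Arguments sub_rank_eq {C N k1 k2 A B}.
Arguments flagV_n {C n N}.
Arguments flagV_pid {C n N}.
Arguments flagV_mono {C n N}.
Arguments rank_flagV {C n N}.
Arguments coordSpan_mono {C N m m'}.

Section X.
Variable (C : fieldType) (n N : nat).

Lemma x_sub_cS : (xmat C n N <= coordSpan C N n.-1)%MS.
Proof.
apply/coordSpanP => a b nb; rewrite /xmat ?mxE.
case: (boolP ((n.-1 <= a)%N && (a < (n.-1).*2)%N && (b + n.-1 == a)%N)) => [/andP[/andP[h1 h2] /eqP h3]|//]; lia.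
Qed.

Lemma cS_sub_x : ((n.-1).*2 <= N)%N -> (coordSpan C N n.-1 <= xmat C n N)%MS.
Proof.
move=> hN; apply/row_subP => b.
case: (ltnP b n.-1) => bn; last first.
  have -> : row b (coordSpan C N n.-1) = 0.
    apply/matrixP => z c; rewrite /xmat ?/coordSpan !mxE.
    case: (boolP ((b == c) && (b < n.-1)%N)) => [/andP[_ h]|//]; lia.
  exact: sub0mx.
have hb : (b + n.-1 < N)%N by lia.
have -> : row b (coordSpan C N n.-1) = row (Ordinal hb) (xmat C n N).
  apply/matrixP => z c; rewrite /xmat ?/coordSpan !mxE /= bn andbT.
  have -> : (n.-1 <= b + n.-1)%N by lia.
  have -> : (b + n.-1 < (n.-1).*2)%N by lia.
  rewrite /= eqn_add2r eq_sym //.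
exact: row_sub.
Qed.

Lemma xx0 : xmat C n N *m xmat C n N = 0.
Proof.
apply/matrixP => a b; rewrite /xmat ?/coordSpan !mxE big1 // => l _; rewrite /xmat ?/coordSpan !mxE.
case: (boolP ((n.-1 <= a)%N && (a < (n.-1).*2)%N && (l + n.-1 == a)%N)) => [/andP[/andP[h1 h2] /eqP h3]|_]; last by rewrite mul0r.
rewrite mul1r.
case: (boolP ((n.-1 <= l)%N && (l < (n.-1).*2)%N && (b + n.-1 == l)%N)) => [/andP[/andP[h4 _] _]|//]; lia.
Qed.

End X.

Lemma sum_true (f : nat -> bool) a b : (forall l, (a <= l < b)%N -> f l) ->
  (\sum_(a <= l < b) (f l : nat))%N = (b - a)%N.
Proof.
move=> H; rewrite (eq_big_nat _ _ (F2 := fun _ => 1%N)).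
  by rewrite sum_nat_const_nat muln1.
by move=> l /H ->.
Qed.

Lemma sum_split (f : nat -> bool) i j : (1 <= i <= j)%N ->
  (\sum_(1 <= l < j.+1) (f l : nat))%N =
  (\sum_(1 <= l < i) (f l : nat) + f i + \sum_(i.+1 <= l < j.+1) (f l : nat))%N.
Proof.
move=> /andP[h1 h2]; rewrite (big_cat_nat _ (n := i.+1)); [|lia|lia].
by rewrite big_nat_recr.
Qed.

Lemma cell_Z (C : fieldType) (n s i : nat) (hn : (2 <= n)%N) (hs : (n.-1 <= s)%N)
  (hi : (1 <= i <= n)%N) (B : 'M[C]_(n, (n+s).-1)) :
  inSchubertCell (wperm n (n+s).-1 i) B -> inY B ->
  (flagV B i.-1 <= coordSpan C (n+s).-1 n.-1)%MS /\
  (B *m xmat C n (n+s).-1 <= flagV B i.-1)%MS.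
Proof.
set N := (n+s).-1.
move=> [fB HC] [_ [XB YB]].
set X := xmat C n N.
have hN : ((n.-1).*2 <= N)%N by rewrite /N; lia.
have XS := @x_sub_cS C n N.
have SX := @cS_sub_x C n N hN.
have rV j : (j <= n)%N -> \rank (flagV B j) = j by move=> jn; exact: rank_flagV.
have S1 : \rank (flagV B i.-1 :&: coordSpan C N n.-1)%MS = i.-1.
  rewrite HC; [|lia|rewrite /N; lia].
  rewrite sum_true; first lia.
  move=> l hl; rewrite /wperm; have -> : (l < i)%N by lia.
  lia.
have C1 : (flagV B i.-1 <= coordSpan C N n.-1)%MS.
  have := sub_rank_eq (capmxSl (flagV B i.-1) (coordSpan C N n.-1)).
  rewrite S1 rV; last by lia.
  move=> /(_ (leqnn _)) H; exact: (submx_trans H (capmxSr _ _)).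
have S2 : \rank (flagV B i :&: coordSpan C N N.-1)%MS = i.-1.
  rewrite HC; [|lia|rewrite /N; lia].
  rewrite (@sum_split _ i i); last by lia.
  rewrite [X in (_ + X)%N]big_geq // sum_true.
    rewrite /wperm ltnn eqxx.
    have -> : (N <= N.-1)%N = false by apply/negbTE; rewrite -ltnNge /N; lia.
    lia.
  move=> l hl; rewrite /wperm; have -> : (l < i)%N by lia.
  rewrite /N; lia.
have S3 : \rank (B :&: coordSpan C N n.-1)%MS = n.-1.
  rewrite -{1}(flagV_n B) HC; [|lia|rewrite /N; lia].
  rewrite (@sum_split _ i n); last by lia.
  rewrite sum_true; last first.
    move=> l hl; rewrite /wperm; have -> : (l < i)%N by lia.
    lia.
  rewrite sum_true; last first.
    move=> l hl; rewrite /wperm; have -> : (l < i)%N = false by apply/negbTE; rewrite -leqNgt; lia.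
    have -> : (l == i) = false by apply/negbTE/eqP; lia.
    lia.
  rewrite /wperm ltnn eqxx.
  have -> : (N <= n.-1)%N = false by apply/negbTE; rewrite -ltnNge /N; lia.
  lia.
have XcapB : (X <= B :&: coordSpan C N n.-1)%MS by rewrite sub_capmx XB XS.
have capX : (B :&: coordSpan C N n.-1 <= X)%MS := submx_trans (capmxSr _ _) SX.
have rX : \rank X = n.-1.
  apply/anti_leq; rewrite -{1}S3 (mxrankS XcapB) /=.
  by rewrite -{1}S3 (mxrankS capX).
have ViB : (flagV B i <= B)%MS.
  rewrite -{2}(flagV_n B); apply: flagV_mono; lia.
have XSN : (X <= coordSpan C N N.-1)%MS.
  apply: (submx_trans XS); apply: coordSpan_mono; rewrite /N; lia.
have nVi : ~~ (flagV B i <= X)%MS.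
  apply/negP => H.
  have H2 : (flagV B i <= flagV B i :&: coordSpan C N N.-1)%MS.
    by rewrite sub_capmx submx_refl (submx_trans H XSN).
  have := mxrankS H2; rewrite S2 rV; last by lia.
  lia.
have rXV : (n <= \rank (X + flagV B i)%MS)%N.
  have := ltn_leqif (mxrank_leqif_sup (addsmxSl X (flagV B i))).
  have -> : ((X + flagV B i)%MS <= X)%MS = false.
    apply/negbTE; apply: contra nVi => H; exact: submx_trans (addsmxSr _ _) H.
  rewrite rX => H.
  have H' : (n.-1 < \rank (X + flagV B i)%MS)%N by rewrite H.
  clear -H' hn; lia.
have BXV : (B <= X + flagV B i)%MS.
  apply: sub_rank_eq; first by rewrite addsmx_sub XB ViB.
  by rewrite (eqP fB).
split => //.
have BXVi : (B *m X <= flagV B i)%MS.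
  apply: (submx_trans (submxMr X BXV)).
  have Yi := YB i (proj2 (andP hi)).
  by rewrite addsmxMr xx0 addsmx_sub sub0mx.
have BXc : (B *m X <= flagV B i :&: coordSpan C N N.-1)%MS.
  by rewrite sub_capmx BXVi (submx_trans (submxMl _ _) XSN).
apply: (submx_trans BXc); apply: sub_rank_eq.
  have h1 : (i.-1 <= i)%N by clear; lia.
  have h2 : (n.-1 <= N.-1)%N by rewrite /N; clear -hs; lia.
  by rewrite sub_capmx flagV_mono // (submx_trans C1) // coordSpan_mono.
have h3 : (i.-1 <= n)%N by clear -hi; lia.
by rewrite S2 rV.
Qed.

Section Norms.
Local Open Scope complex_scope.
Variable R : realType.
Local Notation CC := (R[i]).

Definition nr (z : CC) : R := Normc.normc z.

Lemma nrE (z : CC) : `|z| = (nr z)%:C.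
Proof. by []. Qed.

Lemma nr_ge0 z : 0 <= nr z.
Proof. by rewrite -lecR -nrE normr_ge0. Qed.

Lemma nrD x y : nr (x + y) <= nr x + nr y.
Proof. exact: le_normcD. Qed.

Lemma nrM x y : nr (x * y) = nr x * nr y.
Proof. exact: Normc.normcM. Qed.

Lemma nrN x : nr (- x) = nr x.
Proof. exact: normcN. Qed.

Lemma nr_eq0 x : nr x = 0 -> x = 0.
Proof. exact: Normc.eq0_normc. Qed.

Lemma nr_sum (I : finType) (F : I -> CC) :
  nr (\sum_j F j) <= \sum_j nr (F j).
Proof.
apply: (big_ind2 (fun a b => nr a <= b)).
- by rewrite /nr Normc.normc0.
- move=> a1 a2 b1 b2 h1 h2; apply: (le_trans (nrD _ _)); exact: lerD.
- by [].
Qed.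

Definition nm p q (M : 'M[CC]_(p, q)) : R := \sum_a \sum_b nr (M a b).

Lemma nm_ge0 p q (M : 'M[CC]_(p, q)) : 0 <= nm M.
Proof. by apply: sumr_ge0 => a _; apply: sumr_ge0 => b _; exact: nr_ge0. Qed.

Lemma rowsum_le_nm p q (M : 'M[CC]_(p, q)) a : \sum_b nr (M a b) <= nm M.
Proof.
rewrite /nm (bigD1 a) //= lerDl; apply: sumr_ge0 => a' _.
by apply: sumr_ge0 => b _; exact: nr_ge0.
Qed.

Lemma nr_le_nm p q (M : 'M[CC]_(p, q)) a b : nr (M a b) <= nm M.
Proof.
apply: le_trans (rowsum_le_nm M a).
rewrite (bigD1 b) //= lerDl; apply: sumr_ge0 => b' _; exact: nr_ge0.
Qed.

Lemma nmD p q (M P : 'M[CC]_(p, q)) : nm (M + P) <= nm M + nm P.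
Proof.
rewrite /nm -big_split /=; apply: ler_sum => a _.
rewrite -big_split /=; apply: ler_sum => b _; rewrite mxE; exact: nrD.
Qed.

Lemma nmN p q (M : 'M[CC]_(p, q)) : nm (- M) = nm M.
Proof.
by apply: eq_bigr => a _; apply: eq_bigr => b _; rewrite mxE nrN.
Qed.

Lemma nmB p q (M P : 'M[CC]_(p, q)) : nm (M - P) <= nm M + nm P.
Proof. by rewrite -(nmN P); exact: nmD. Qed.

Lemma nmM p q r (M : 'M[CC]_(p, q)) (P : 'M[CC]_(q, r)) :
  nm (M *m P) <= nm M * nm P.
Proof.
rewrite /nm mulr_suml; apply: ler_sum => a _.
apply: (@le_trans _ _ (\sum_b \sum_l nr (M a l) * nr (P l b))).
  apply: ler_sum => b _; rewrite mxE; apply: (le_trans (nr_sum _)).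
  by apply: ler_sum => l _; rewrite nrM.
rewrite exchange_big /= mulr_suml; apply: ler_sum => l _.
rewrite -mulr_sumr; apply: ler_wpM2l; first exact: nr_ge0.
exact: rowsum_le_nm.
Qed.

Lemma nm_bound p q (M : 'M[CC]_(p, q)) e :
  (forall a b, nr (M a b) <= e) -> nm M <= (p * q)%:R * e.
Proof.
move=> H; apply: (@le_trans _ _ (\sum_(a < p) \sum_(b < q) e)).
  by apply: ler_sum => a _; apply: ler_sum => b _; exact: H.
rewrite sumr_const card_ord sumr_const card_ord -mulrnA.
by rewrite mulr_natl mulnC.
Qed.

Lemma nm_eq0 p q (M : 'M[CC]_(p, q)) : nm M <= 0 -> M = 0.
Proof.
move=> H; apply/matrixP => a b; rewrite mxE; apply: nr_eq0.
by apply/le_anti; rewrite nr_ge0 (le_trans (nr_le_nm M a b) H).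
Qed.

Lemma small_le0 (x a K : R) : 0 <= a -> 0 <= K ->
  (forall e, 0 < e -> e * a <= 1 -> x <= e * K) -> x <= 0.
Proof.
move=> a0 K0 H; rewrite leNgt; apply/negP => x0.
set d := x * a + K + x.
have d0 : 0 < d by rewrite /d; have := mulr_ge0 (ltW x0) a0; lra.
have := H (x / d); rewrite divr_gt0 // => /(_ isT).
have h1 : x / d * a <= 1.
  by rewrite mulrAC ler_pdivrMr // mul1r /d; lra.
move=> /(_ h1); rewrite mulrAC ler_pdivlMr // /d => h2.
have h3 : 0 <= x * x * a by apply: mulr_ge0 => //; nra.
nra.
Qed.

End Norms.

Section H3.
Local Open Scope complex_scope.
Lemma limit_Z3 (R : realType) n N k (hk : (k.-1 <= n)%N)
  (A : 'M[R[i]]_(n, N)) (X : 'M[R[i]]_N) : row_free A ->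
  (forall e : R, 0 < e -> exists B : 'M[R[i]]_(n, N),
     (B *m X <= flagV B k.-1)%MS /\ forall a b, nr (A a b - B a b) < e) ->
  (A *m X <= flagV A k.-1)%MS.
Proof.
move=> /row_freeP [Rr ARr] H.
set P : 'M[R[i]]_n := pid_mx k.-1.
set VA := P *m A.
set Q : 'M[R[i]]_N := 1%:M - pinvmx VA *m VA.
set u := A *m X.
have VAQ : VA *m Q = 0.
  by rewrite /Q mulmxBr mulmx1 mulmxA mulmxKpV ?subrr.
have PP : P *m P = P by rewrite /P pid_mx_id.
suff uQ : u *m Q = 0.
  have -> : u = u *m pinvmx VA *m VA.
    by apply/eqP; rewrite -subr_eq0 -mulmxA -{1}(mulmx1 u) -mulmxBr uQ.
  by rewrite flagV_pid submxMl.
apply: nm_eq0.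
set kR := nm Rr; set kA := nm A; set kX := nm X; set kQ := nm Q.
set Kc := 2 * ((kA + 1) * kX * kR).
set nN : R := (n * N)%:R.
have kR0 : 0 <= kR := nm_ge0 _.
have kA0 : 0 <= kA := nm_ge0 _.
have kX0 : 0 <= kX := nm_ge0 _.
have kQ0 : 0 <= kQ := nm_ge0 _.
have nN0 : 0 <= nN by rewrite /nN ler0n.
apply: (@small_le0 _ _ (nN * (2 * kR + 2)) (nN * (Kc + kX) * kQ)).
- by apply: mulr_ge0 => //; lra.
- by apply: mulr_ge0 => //; apply: mulr_ge0 => //; rewrite /Kc; 
    have := mulr_ge0 (mulr_ge0 (addr_ge0 kA0 ler01) kX0) kR0; lra.
move=> e e0 hea.
have [B [HB HAB]] := H e e0.
set E := B - A.
have nE : nm E <= nN * e.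
  apply: nm_bound => a b; rewrite !mxE -nrN opprB; exact: ltW.
have BAE : B = A + E by rewrite /E addrC subrK.
move: HB; rewrite flagV_pid => /submxP [D hD].
set c := D *m P.
have hc : B *m X = c *m B by rewrite hD mulmxA.
have cP : c *m P = c by rewrite /c -mulmxA PP.
have ceq : c = B *m X *m Rr - c *m (E *m Rr).
  rewrite hc BAE -mulmxA mulmxDl ARr mulmxDr mulmx1.
  by rewrite addrK.
have hW : nm (B *m X *m Rr) <= (kA + nm E) * kX * kR.
  apply: (le_trans (nmM _ _)); apply: ler_wpM2r => //.
  apply: (le_trans (nmM _ _)); apply: ler_wpM2r => //.
  by rewrite BAE; exact: nmD.
have hF : nm (E *m Rr) <= nm E * kR := nmM _ _.
have hc1 : nm c <= nm (B *m X *m Rr) + nm c * nm (E *m Rr).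
  rewrite {1}ceq; apply: (le_trans (nmB _ _)); rewrite lerD2l; exact: nmM.
have nE0 : 0 <= nm E := nm_ge0 _.
have nc0 : 0 <= nm c := nm_ge0 _.
have nF0 : 0 <= nm (E *m Rr) := nm_ge0 _.
have tE : nm E * (2 * kR + 2) <= 1.
  apply: le_trans hea; rewrite mulrA; apply: ler_wpM2r; first lra.
  by rewrite mulrC.
have hcK : nm c <= Kc.
  have h2F : 2 * nm (E *m Rr) <= 1.
    have := mulr_ge0 nE0 kR0; lra.
  have hnc : nm c <= 2 * nm (B *m X *m Rr).
    have := mulr_ge0 nc0 nF0; nra.
  apply: (le_trans hnc); rewrite /Kc ler_pM2l //; apply: (le_trans hW).
  apply: ler_wpM2r => //; apply: ler_wpM2r => //.
  have : nm E <= 1 by have := mulr_ge0 nE0 kR0; lra.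
  lra.
have uQE : u *m Q = (c *m E - E *m X) *m Q.
  have -> : c *m E - E *m X = u - c *m VA.
    rewrite /VA mulmxA cP /u /E mulmxBr mulmxBl -hc.
    by rewrite opprB addrC addrA subrK.
  by rewrite mulmxBl -[c *m VA *m Q]mulmxA VAQ mulmx0 subr0.
have Kc0 : 0 <= Kc by apply: le_trans hcK.
have h4 : nm (c *m E - E *m X) <= (Kc + kX) * (nN * e).
  apply: (le_trans (nmB _ _)).
  have h5 := nmM c E; have h6 := nmM E X; rewrite -/kX in h6.
  have h7 : nm c * nm E <= Kc * nm E by apply: ler_wpM2r.
  have h8 : (Kc + kX) * nm E <= (Kc + kX) * (nN * e) by apply: ler_wpM2l => //; lra.
  lra.
rewrite uQE; apply: (le_trans (nmM _ _)).
have h9 := ler_wpM2r kQ0 h4.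
apply: (le_trans h9).
have -> : e * (nN * (Kc + kX) * kQ) = (Kc + kX) * (nN * e) * kQ by ring.
by [].
Qed.

End H3.
End Helpers.
Import Helpers.
Unset Implicit Arguments.

Theorem proposition3p5 (R : realType) (n s i : nat)
  (hn : (2 <= n)%N) (hs : (n.-1 <= s)%N)
  (hi : (1 <= i <= n)%N) (hadm : s = n.-1 -> (2 <= i)%N)
  (A : 'M[R[i]]_(n, (n + s).-1)) :
  @inK R n s i A -> inZ i A.
Proof.
move=> [[fA [XA YA]] [_ Hcl]].
have Hcl' : forall e : R, 0 < e -> exists B : 'M[R[i]]_(n, (n + s).-1),
    (inSchubertCell (wperm n (n+s).-1 i) B /\ inY B) /\
    forall a b, nr (A a b - B a b) < e.
  move=> e e0; have [|B [HB HAB]] := Hcl (e%:C)%C; first by rewrite ltcR.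
  by exists B; split => // a b; rewrite -ltcR -nrE; exact: HAB.
have hN : ((n.-1).*2 <= (n + s).-1)%N by clear -hn hs; lia.
split => //; split; last split => //.
  apply: (submx_trans _ (@cS_sub_x _ n _ hN)).
  apply/coordSpanP => a b nb; rewrite /flagV mxE; case: ifP => // ha.
  apply: nr_eq0; apply/le_anti; rewrite nr_ge0 andbT.
  apply: (@small_le0 _ _ 0 1); [lra|lra|] => e e0 _.
  have [B [[HC HY] HAB]] := Hcl' e e0.
  have [C1 _] := @cell_Z _ n s i hn hs hi B HC HY.
  move/coordSpanP: C1 => /(_ a b nb); rewrite /flagV mxE ha => Bab.
  by have := HAB a b; rewrite Bab subr0 mulr1 => /ltW.
apply: limit_Z3 => //; first by clear -hi; lia.
move=> e e0; have [B [[HC HY] HAB]] := Hcl' e e0.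
have [_ C2] := @cell_Z _ n s i hn hs hi B HC HY.
by exists B.
Qed.
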